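(* Let $\mathcal{X}$ be an input space, $\mathcal{Y}$ an output space, and $d_{\mathcal{X}}:\mathcal{X}\times\mathcal{X}\to\mathbb{R}_{\ge 0}$ a distance function. Define $d$ on $\mathcal{X}\times\mathcal{Y}$ by $d((x_1,y_1),(x_2,y_2)) = d_{\mathcal{X}}(x_1,x_2)$ if $y_1=y_2$ and $d((x_1,y_1),(x_2,y_2))=\infty$ otherwise. Let $\mathcal{D}$ and $\tilde{\mathcal{D}}$ be probability distributions on $\mathcal{X}\times\mathcal{Y}$ such that $W_1^{d}(\mathcal{D},\tilde{\mathcal{D}})\le \epsilon$ for a real number $\epsilon\ge 0$, in the sense that there exists a coupling $\gamma^*$ of $\mathcal{D}$ and $\tilde{\mathcal{D}}$ (a joint distribution on $(\mathcal{X}\times\mathcal{Y})^2$ with marginals $\mathcal{D}$ and $\tilde{\mathcal{D}}$) with $\mathbb{E}_{(\tau_1,\tau_2)\sim\gamma^*}[d(\tau_1,\tau_2)]\le\epsilon$. Let $\mathcal{S}:\mathcal{X}\to\Delta(\mathcal{X})$ assign to each $x\in\mathcal{X}$ a probability distribution $\mathcal{S}(x)$ on $\mathcal{X}$, and let $\psi:\mathbb{R}_{\ge0}\to\mathbb{R}$ be a concave non-decreasing function such that $\mathrm{TV}(\mathcal{S}(x_1),\mathcal{S}(x_2))\le \psi(d_{\mathcal{X}}(x_1,x_2))$ for all $x_1,x_2\in\mathcal{X}$. Given a function $h:\mathcal{X}\times\mathcal{Y}\to[0,1]$, define its smoothed version $\bar h(x,y)=\mathbb{E}_{x'\sim\mathcal{S}(x)}[h(x',y)]$.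 Then \[\left|\mathbb{E}_{(x_1,y_1)\sim\mathcal{D}}[\bar h(x_1,y_1)] - \mathbb{E}_{(x_2,y_2)\sim\tilde{\mathcal{D}}}[\bar h(x_2,y_2)]\right|\le \psi(\epsilon).\]
   Context: $\mathrm{TV}$ denotes total variation distance between probability distributions, $\mathrm{TV}(\mu_1,\mu_2)=\tfrac12\int|\mu_1-\mu_2|$. $\Delta(\mathcal{X})$ denotes the set of probability distributions over $\mathcal{X}$. $W_1^d$ is the 1-Wasserstein distance with respect to the cost $d$. *)

(* Defs.v *)
From HB Require Import structures.
From mathcomp Require Import all_boot all_order all_algebra.
From mathcomp Require Import all_classical all_reals all_analysis.
Set Implicit Arguments. Unset Strict Implicit. Unset Printing Implicit Defensive.
Import Order.TTheory GRing.Theory Num.Theory.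
Local Open Scope classical_set_scope.
Local Open Scope ring_scope.
Local Open Scope ereal_scope.

(* Total variation distance between two measures on T:
   TV(mu1,mu2) = sup_{A measurable} |mu1 A - mu2 A|
   (for probability measures this equals 1/2 int |mu1 - mu2|). *)
Definition TV {d} {T : measurableType d} {R : realType}
  (mu1 mu2 : set T -> \bar R) : \bar R :=
  ereal_sup [set `|mu1 A - mu2 A| | A in [set A | measurable A]].

Definition label_cost {X Y : Type} {R : realType} (dX : X -> X -> R)
  (t1 t2 : X * Y) : \bar R :=
  if `[< t1.2 = t2.2 >] then (dX t1.1 t2.1)%:E else +oo.

Definition smoothed {dx} {X : measurableType dx} {Y : Type} {R : realType}
  (S : X -> {measure set X -> \bar R}) (h : X * Y -> R) (p : X * Y) : \bar R :=
  \int[S p.1]_x' (h (x', p.2))%:E.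

(* Main.v *)
Require Import Defs.
From HB Require Import structures.
From mathcomp Require Import all_boot all_order all_algebra.
From mathcomp Require Import all_classical all_reals all_analysis.
From mathcomp Require Import ring lra measurable_realfun.
Import Order.TTheory GRing.Theory Num.Theory.
Local Open Scope classical_set_scope.
Local Open Scope ring_scope.
Local Open Scope ereal_scope.

Section Sprob.
Context d (X : measurableType d) (R : realType) (S : R.-pker X ~> X) (x : X).
Definition Sx : set X -> \bar R := S x.
HB.instance Definition _ := Measure.copy Sx (S x).
HB.instance Definition _ := Measure_isProbability.Build _ _ _ Sx (@prob_kernel _ _ _ _ _ S x).
End Sprob.

Lemma TV_int d (T : measurableType d) (R : realType)
  (mu1 mu2 : probability T R) (f : T -> R) :
  measurable_fun setT f -> (forall x, 0 <= f x <= 1)%R ->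
  \int[mu1]_x (f x)%:E <= \int[mu2]_x (f x)%:E + TV mu1 mu2.
Proof.
move=> mf f01.
pose nu := cadd (charge_of_finite_measure mu1) (copp (charge_of_finite_measure mu2)).
have [P [N nuPN]] := Hahn_decomposition nu.
pose pos := jordan_pos nuPN.
pose neg := jordan_neg nuPN.
have [[mP _] _ _ _] := nuPN.
have key : forall A, measurable A -> mu1 A + neg A = mu2 A + pos A.
  move=> A mA.
  have := jordan_decomp nuPN mA.
  rewrite /pos /neg; move=> E; have {E}: mu1 A - mu2 A = jordan_pos nuPN A + (-1)%:E * jordan_neg nuPN A by exact: E.
  have f1 : mu1 A \is a fin_num by exact: fin_num_measure.
  have f2 : mu2 A \is a fin_num by exact: fin_num_measure.
  have f3 : jordan_pos nuPN A \is a fin_num by exact: fin_num_measure.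
  have f4 : jordan_neg nuPN A \is a fin_num by exact: fin_num_measure.
  rewrite -(fineK f1) -(fineK f2) -(fineK f3) -(fineK f4) -EFinM -EFinB -!EFinD.
  by case=> H; congr EFin; lra.
have mF : measurable_fun setT (EFin \o f) by exact/measurable_EFinP.
have F0 : forall x, setT x -> 0 <= (f x)%:E by move=> x _; rewrite lee_fin; have /andP[] := f01 x.
have eqI : \int[measure_add mu1 neg]_x (f x)%:E = \int[measure_add mu2 pos]_x (f x)%:E.
  apply: eq_measure_integral => A mA _.
  by rewrite /= /msum !big_ord_recl !big_ord0 /= !adde0 key.

rewrite !ge0_integral_measure_add// in eqI.
have n0 : 0 <= \int[neg]_x (f x)%:E by apply: integral_ge0.
have pP : \int[pos]_x (f x)%:E <= TV mu1 mu2.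
  apply: (@le_trans _ _ (\int[pos]_x cst 1 x)).
    apply: ge0_le_integral => //.
    by move=> x _; rewrite lee_fin; have /andP[] := f01 x.
  rewrite integral_cst // mul1e /pos /=.
rewrite /jordan_pos /measure_of_charge /= /crestr0 mem_set //= /crestr setTI.
  apply: (@le_trans _ _ `|mu1 P - mu2 P|); first exact: lee_abs.
  by apply: ereal_sup_ubound; exists P.
apply: (le_trans (leeDl _ n0)); rewrite eqI.
by rewrite leeD2l.
Qed.
Local Open Scope ring_scope.
Section supergrad.
Context (R : realType) (psi : R -> R)
  (psi_ndecr : forall a b, (0 <= a)%R -> (a <= b)%R -> (psi a <= psi b)%R)
  (psi_concave : forall a b t, (0 <= a)%R -> (0 <= b)%R -> (0 <= t <= 1)%R ->
      (t * psi a + (1 - t) * psi b <= psi (t * a + (1 - t) * b))%R).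

Lemma chord b e a : 0 <= b -> b < e -> e < a ->
  (psi a - psi e) / (a - e) <= (psi e - psi b) / (e - b).
Proof.
move=> b0 be ea.
have ab : 0 < a - b by lra.
pose t := (a - e) / (a - b).
have t01 : 0 <= t <= 1.
  apply/andP; split; first by rewrite divr_ge0 //; lra.
  by rewrite ler_pdivrMr // mul1r; lra.
have H := psi_concave b a t b0 (ltW (le_lt_trans b0 (lt_trans be ea))) t01.
have te : t * b + (1 - t) * a = e by rewrite /t; field; lra.
rewrite te in H.
have K : (a - e) * psi b + (e - b) * psi a <= (a - b) * psi e.
  have := ler_wpM2r (ltW ab) H.
  have -> : (t * psi b + (1 - t) * psi a) * (a - b) = (a - e) * psi b + (e - b) * psi a.
    by rewrite /t; field; lra.
  by rewrite [psi e * _]mulrC.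
rewrite ler_pdivrMr; last lra.
rewrite mulrAC ler_pdivlMr; last lra.
nra.
Qed.

Lemma supergrad e : 0 < e -> exists c, 0 <= c /\
  forall a, 0 <= a -> psi a <= psi e + c * (a - e).
Proof.
move=> e0.
pose E := [set (psi a - psi e) / (a - e) | a in [set a | e < a]].
have E0 : E !=set0 by exists ((psi (e + 1) - psi e) / (e + 1 - e)); exists (e + 1) => //=; lra.
have Eub : ubound E ((psi e - psi 0) / (e - 0)).
  by move=> _ [a /= ea <-]; apply: chord => //.
have hs : has_sup E by split => //; exists ((psi e - psi 0) / (e - 0)).
exists (sup E); split.
  apply: (le_trans _ (sup_upper_bound hs (_ : E ((psi (e + 1) - psi e) / (e + 1 - e))))).
    rewrite divr_ge0 //; last lra.
    by rewrite subr_ge0; apply: psi_ndecr; lra.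
  by exists (e + 1) => //=; lra.
move=> a a0.
have [ae|ea|->] := ltgtP a e; last by rewrite subrr mulr0 addr0.
- have : sup E <= (psi e - psi a) / (e - a).
    by apply: ge_sup => // _ [a' /= ea' <-]; apply: chord.
  rewrite ler_pdivlMr; last lra.
  nra.
- have : (psi a - psi e) / (a - e) <= sup E.
    by apply: sup_upper_bound => //; exists a.
  rewrite ler_pdivrMr; last lra.
  nra.
Qed.
End supergrad.
Local Open Scope ereal_scope.

Lemma int01 d (T : measurableType d) (R : realType) (mu : probability T R) (f : T -> R) :
  measurable_fun setT f -> (forall x, 0 <= f x <= 1)%R ->
  0 <= \int[mu]_x (f x)%:E <= 1.
Proof.
move=> mf f01.
have mF : measurable_fun setT (EFin \o f) by exact/measurable_EFinP.
apply/andP; split.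
  by apply: integral_ge0 => x _; rewrite lee_fin; have /andP[] := f01 x.
apply: (@le_trans _ _ (\int[mu]_x cst 1 x)).
  apply: ge0_le_integral => //.
    by move=> x _; rewrite lee_fin; have /andP[] := f01 x.
  by move=> x _; rewrite lee_fin; have /andP[] := f01 x.
rewrite integral_cst // mul1e.
exact: probability_le1.
Qed.

Lemma TV_sym d (T : measurableType d) (R : realType) (mu1 mu2 : probability T R) :
  TV mu2 mu1 = TV mu1 mu2.
Proof.
rewrite /TV; congr ereal_sup; apply/seteqP; split => _ [A mA <-]; exists A => //.
  have f1 : mu1 A \is a fin_num by exact: fin_num_measure.
  have f2 : mu2 A \is a fin_num by exact: fin_num_measure.
  by rewrite -(fineK f1) -(fineK f2) -!EFinB !abse_EFin distrC.
have f1 : mu1 A \is a fin_num by exact: fin_num_measure.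
have f2 : mu2 A \is a fin_num by exact: fin_num_measure.
by rewrite -(fineK f1) -(fineK f2) -!EFinB !abse_EFin distrC.
Qed.

Lemma TV_abs d (T : measurableType d) (R : realType) (mu1 mu2 : probability T R)
  (f : T -> R) (b : R) :
  measurable_fun setT f -> (forall x, 0 <= f x <= 1)%R -> TV mu1 mu2 <= b%:E ->
  `|\int[mu1]_x (f x)%:E - \int[mu2]_x (f x)%:E| <= b%:E.
Proof.
move=> mf f01 TVb.
have I1 := @TV_int _ _ _ mu1 mu2 f mf f01.
have I2 := @TV_int _ _ _ mu2 mu1 f mf f01.
rewrite TV_sym in I2.
have J1 := le_trans I1 (leeD2l _ TVb).
have J2 := le_trans I2 (leeD2l _ TVb).
have /andP[a0 a1] := @int01 _ _ _ mu1 f mf f01.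
have /andP[c0 c1] := @int01 _ _ _ mu2 f mf f01.
have fa : \int[mu1]_x (f x)%:E \is a fin_num.
  by rewrite ge0_fin_numE // (le_lt_trans a1) // ltry.
have fc : \int[mu2]_x (f x)%:E \is a fin_num.
  by rewrite ge0_fin_numE // (le_lt_trans c1) // ltry.
move: J1 J2; rewrite -(fineK fa) -(fineK fc) -!EFinD !lee_fin => J1 J2.
by rewrite ler_norml; apply/andP; split; lra.
Qed.

Section kfst.
Context dx dy (X : measurableType dx) (Y : measurableType dy) (R : realType)
  (S : R.-pker X ~> X).
Definition kfst : X * Y -> {measure set X -> \bar R} := fun p => S p.1.
Lemma kfst_meas U : measurable U -> measurable_fun setT (kfst ^~ U).
Proof. by move=> mU; exact: (measurableT_comp (measurable_kernel S U mU) measurable_fst). Qed.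
HB.instance Definition _ := isKernel.Build _ _ _ _ _ kfst kfst_meas.
Lemma kfst_uub : measure_fam_uub kfst.
Proof. by exists 2%R => p; rewrite /kfst prob_kernel lte_fin ltr1n. Qed.
HB.instance Definition _ := Kernel_isFinite.Build _ _ _ _ _ kfst kfst_uub.
End kfst.

Theorem theorem1 (R : realType) (dx dy : measure_display)
  (X : measurableType dx) (Y : measurableType dy)
  (dX : X -> X -> R)
  (dX_ge0 : forall x1 x2, (0 <= dX x1 x2)%R)
  (dX_meas : measurable_fun setT (fun p : X * X => dX p.1 p.2))
  (diagY_meas : measurable [set p : Y * Y | p.1 = p.2])
  (D Dt : probability (X * Y)%type R) (eps : R) (eps_ge0 : (0 <= eps)%R)
  (gam : probability ((X * Y) * (X * Y))%type R)
  (gam_marg1 : forall A, measurable A -> gam (A `*` setT) = D A)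
  (gam_marg2 : forall A, measurable A -> gam (setT `*` A) = Dt A)
  (gam_cost : \int[gam]_t label_cost dX t.1 t.2 <= eps%:E)
  (S : R.-pker X ~> X)
  (psi : R -> R)
  (psi_ndecr : forall a b, (0 <= a)%R -> (a <= b)%R -> (psi a <= psi b)%R)
  (psi_concave : forall a b t, (0 <= a)%R -> (0 <= b)%R -> (0 <= t <= 1)%R ->
      (t * psi a + (1 - t) * psi b <= psi (t * a + (1 - t) * b))%R)
  (S_TV : forall x1 x2, TV (S x1) (S x2) <= (psi (dX x1 x2))%:E)
  (h : X * Y -> R)
  (h_meas : measurable_fun setT h)
  (h_range : forall p, (0 <= h p <= 1)%R) :
  `| \int[D]_p smoothed S h p - \int[Dt]_p smoothed S h p | <= (psi eps)%:E.
Proof.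
set hb := smoothed S h.
have mhy : forall y, measurable_fun setT (fun z : X => (h (z, y))%:E).
  by move=> y; apply/measurable_EFinP; exact: (measurable_fun_pair1 y h_meas).
have h0 : forall p, 0 <= (h p)%:E by move=> p; rewrite lee_fin; have /andP[] := h_range p.
have h1 : forall p, (h p)%:E <= 1 by move=> p; rewrite lee_fin; have /andP[] := h_range p.
have hb01 : forall p, 0 <= hb p <= 1.
  move=> [x y]; rewrite /hb /smoothed /=; apply/andP; split.
    by apply: integral_ge0 => z _.
  apply: (@le_trans _ _ (\int[S x]_z cst 1 z)).
    by apply: ge0_le_integral => //.
  by rewrite integral_cst // mul1e prob_kernel.
have mhb : measurable_fun setT hb.
  have mk : measurable_fun setT (fun q : (X * Y) * X => (h (q.2, q.1.2))%:E).
    apply/measurable_EFinP; apply: (measurableT_comp h_meas).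
    apply: measurable_fun_pair => //; exact: measurableT_comp.
  have := measurable_fun_integral_finite_kernel _ (@kfst _ _ X Y R S) (fun q => h0 _) mk.
  exact.

have hb0 : forall p, 0 <= hb p by move=> p; have /andP[] := hb01 p.
have hbf : forall p, hb p \is a fin_num.
  by move=> p; have /andP[p0 p1] := hb01 p; rewrite ge0_fin_numE // (le_lt_trans p1) // ltry.
have eqD : \int[D]_p hb p = \int[gam]_t hb t.1.
  transitivity (\int[pushforward gam fst]_p hb p).
    apply: eq_measure_integral => A mA _.
    transitivity (gam (A `*` setT)); first exact: (esym (gam_marg1 A mA)).
    rewrite /pushforward; congr (gam _).
    by apply/seteqP; split => -[a b] /=; [case|].
  by rewrite (ge0_integral_pushforward measurable_fst) //.
have eqDt : \int[Dt]_p hb p = \int[gam]_t hb t.2.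
  transitivity (\int[pushforward gam snd]_p hb p).
    apply: eq_measure_integral => A mA _.
    transitivity (gam (setT `*` A)); first exact: (esym (gam_marg2 A mA)).
    rewrite /pushforward; congr (gam _).
    by apply/seteqP; split => -[a b] /=; [case|].
  by rewrite (ge0_integral_pushforward measurable_snd) //.
set cost := fun t : (X * Y) * (X * Y) => label_cost dX t.1 t.2.
have cost0 : forall t, 0 <= cost t.
  move=> t; rewrite /cost /label_cost; case: asboolP => _; last exact: leey.
  by rewrite lee_fin.
have mcost : measurable_fun setT cost.
  rewrite /cost /label_cost /=; apply: measurable_fun_ifT.
  - apply: (measurable_fun_bool true); rewrite setTI.
    have -> : (fun t : (X * Y) * (X * Y) => `[< t.1.2 = t.2.2 >]) @^-1` [set true] =
        (fun t : (X * Y) * (X * Y) => (t.1.2, t.2.2)) @^-1` [set p | p.1 = p.2].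
      by apply/seteqP; split => t /=; [move/asboolP | move=> ?; apply/asboolP].
    rewrite -[X in measurable X]setTI.
    apply: (measurable_fun_pair (measurableT_comp measurable_snd measurable_fst)
      (measurableT_comp measurable_snd measurable_snd)) => //.
  - apply/measurable_EFinP.
    exact: (measurableT_comp dX_meas (measurable_fun_pair (measurableT_comp measurable_fst measurable_fst)
      (measurableT_comp measurable_fst measurable_snd))).
  - exact: measurable_cst.
have pw : forall x1 x2 y, `|hb (x1, y) - hb (x2, y)| <= (psi (dX x1 x2))%:E.
  move=> x1 x2 y.
  have e1 : forall x, \int[Sx _ _ _ S x]_z (h (z, y))%:E = hb (x, y).
    by move=> x; apply: eq_measure_integral.
  have := (@TV_abs _ _ _ (Sx _ _ _ S x1) (Sx _ _ _ S x2) (fun z => h (z, y)) (psi (dX x1 x2))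
    (measurable_fun_pair1 y h_meas) (fun z => h_range (z, y))).
  by rewrite !e1; apply; exact: S_TV.

have Icost0 : 0 <= \int[gam]_t cost t by apply: integral_ge0 => t _.
have Icostf : \int[gam]_t cost t \is a fin_num.
  by rewrite ge0_fin_numE // (le_lt_trans gam_cost) // ltry.
have [c [c0 aeb]] : exists c : R, (0 <= c)%R /\
    {ae gam, forall t, setT t -> `|hb t.1 - hb t.2| <= ((psi eps - c * eps)%R)%:E + c%:E * cost t}.
  have [e0|e0] := eqVneq eps 0%R.
    exists 0%R; split => //.
    have H : ae_eq gam setT cost (cst 0).
      apply/(ae_eq_integral_abs gam measurableT mcost).
      under eq_integral do rewrite gee0_abs //.
      apply/eqP; rewrite eq_le Icost0 andbT; apply: (le_trans gam_cost); by rewrite e0 lee_fin.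
    apply: filterS H => -[[x1 y1] [x2 y2]] /(_ I).
    rewrite /cost /label_cost /=; case: asboolP => /= [yeq|_] //.
    move=> [dX0]; rewrite e0 mul0r subr0 mul0e adde0 -dX0 yeq.
    by move=> _; exact: pw.
  have epos : (0 < eps)%R by rewrite lt0r e0 eps_ge0.
  have [c [c0 hc]] := @supergrad R psi psi_ndecr psi_concave eps epos.
  exists c; split => //.
  have Hint : gam.-integrable setT cost.
    apply/integrableP; split => //.
    under eq_integral do rewrite gee0_abs //.
    by rewrite (le_lt_trans gam_cost) // ltry.
  apply: filterS (integrable_ae measurableT Hint) => -[[x1 y1] [x2 y2]] /(_ I).
  rewrite /cost /label_cost /=; case: asboolP => /= [yeq|_] // _ _.
  rewrite yeq; apply: (le_trans (pw x1 x2 y2)).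
  rewrite -EFinM -EFinD lee_fin.
  have := hc _ (dX_ge0 x1 x2); lra.
pose k := (psi eps - c * eps)%R.
pose M := Num.max 0%R k.
have M0 : (0 <= M)%R by rewrite le_max lexx.
have Mk : (0 <= M - k)%R by rewrite subr_ge0 le_max lexx orbT.
have mG : measurable_fun setT (fun t : (X * Y) * (X * Y) => `|hb t.1 - hb t.2|).
  have H := emeasurable_funB (measurableT_comp mhb measurable_fst) (measurableT_comp mhb measurable_snd).
  have H2 := measurableT_comp (@abse_measurable R setT) H.
  exact H2.
set J := \int[gam]_t `|hb t.1 - hb t.2|.
have J0 : 0 <= J by apply: integral_ge0.
have key : J + (M - k)%:E <= M%:E + c%:E * eps%:E.
  have := @ae_ge0_le_integral _ _ _ gam setT measurableT
    (fun t => `|hb t.1 - hb t.2| + (M - k)%:E) (fun t => M%:E + c%:E * cost t).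
  rewrite ge0_integralD //.
  rewrite ge0_integralD //; [|by move=> t _; apply: mule_ge0; [rewrite lee_fin|exact: cost0]
    |by apply: emeasurable_funM => //; exact: measurable_cst].
  rewrite ge0_integralZl //.
  have g1 : (gam : {measure set _ -> \bar R}) setT = 1 := probability_setT gam.
  rewrite !integral_cst // g1.
  rewrite !mule1.
  move=> H; apply: (le_trans (H _ _ _ _ _)).
  - by move=> t _; rewrite adde_ge0 // lee_fin.
  - by apply: emeasurable_funD => //; exact: measurable_cst.
  - by move=> t _; rewrite adde_ge0 // ?lee_fin // mule_ge0 // lee_fin.
  - by apply: emeasurable_funD; [exact: measurable_cst|apply: emeasurable_funM => //; exact: measurable_cst].
  - apply: filterS aeb => t Ht _; have {}Ht := Ht I.
    have -> : M%:E + c%:E * cost t = ((psi eps - c * eps)%R)%:E + c%:E * cost t + (M - k)%:E.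
      rewrite addeAC -EFinD /k; congr (_ + _); congr EFin; ring.
    by rewrite leeD2r.
  - by apply: leeD2l; apply: lee_wpmul2l; [rewrite lee_fin|exact: gam_cost].

have Jf : J \is a fin_num.
  rewrite ge0_fin_numE //; apply: (le_lt_trans _ (ltry (M + c * eps)%R)).
  rewrite EFinD EFinM; apply: le_trans key; exact: leeDl.
have Jle : J <= (psi eps)%:E.
  move: key; rewrite -(fineK Jf) -EFinD -EFinM -EFinD !lee_fin /k => key; lra.
have mh1 : measurable_fun setT (fun t : (X * Y) * (X * Y) => hb t.1).
  exact: (measurableT_comp mhb measurable_fst).
have mh2 : measurable_fun setT (fun t : (X * Y) * (X * Y) => hb t.2).
  exact: (measurableT_comp mhb measurable_snd).
have pwl : forall x y : \bar R, x \is a fin_num -> y \is a fin_num ->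
    x <= y + `|x - y| /\ y <= x + `|x - y|.
  move=> x y fx fy; rewrite -(fineK fx) -(fineK fy) -EFinB abse_EFin -!EFinD !lee_fin.
  have := ler_norm (fine x - fine y); have := ler_norm (fine y - fine x).
  rewrite distrC; split; lra.
have I12 : \int[gam]_t hb t.1 <= \int[gam]_t hb t.2 + J.
  rewrite /J -ge0_integralD //.
  apply: ge0_le_integral => //; last first.
    by move=> t _; have [] := pwl _ _ (hbf t.1) (hbf t.2).
  exact: (emeasurable_funD mh2 mG).
have I21 : \int[gam]_t hb t.2 <= \int[gam]_t hb t.1 + J.
  rewrite /J -ge0_integralD //.
  apply: ge0_le_integral => //; last first.
    by move=> t _; have [] := pwl _ _ (hbf t.1) (hbf t.2).
  exact: (emeasurable_funD mh1 mG).
have If : forall f : (X * Y) * (X * Y) -> X * Y, measurable_fun setT f ->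
    \int[gam]_t hb (f t) \is a fin_num.
  move=> f mf; rewrite ge0_fin_numE; last by apply: integral_ge0.
  apply: (le_lt_trans _ (ltry 1%R)).
  apply: (@le_trans _ _ (\int[gam]_t cst 1 t)).
    apply: ge0_le_integral => //.
      exact: (measurableT_comp mhb mf).
    by move=> t _; have /andP[] := hb01 (f t).
  have g1 : (gam : {measure set _ -> \bar R}) setT = 1 := probability_setT gam.
  by rewrite integral_cst // g1 mule1.
have f1 := If _ measurable_fst.
have f2 := If _ measurable_snd.
rewrite eqD eqDt.
move: I12 I21 Jle; rewrite -(fineK f1) -(fineK f2) -(fineK Jf) -EFinB abse_EFin -!EFinD !lee_fin.
by move=> I12 I21 Jle; rewrite ler_norml; apply/andP; split; lra.
Qed.
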